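(* For every odd $k\ge3$, the map $p\in[0,p_k^\star]\mapsto\varphi^-_{p,k}$ is increasing.
   Context: For odd $k$, $p,x\in[0,1]$: $F_{p,k}(x)=\Pr[\mathrm{Bin}(k,(1-p)x)\ge(k+1)/2]$. $p_k^\star\in[1/9,1/2)$ is the (unique) value such that for $0\le p<p_k^\star$ the equation $F_{p,k}(x)=x$ on $[0,1]$ has exactly three solutions $0<\varphi^-_{p,k}<\varphi^+_{p,k}$; for $p=p_k^\star$ exactly two solutions $0$ and $\varphi_{p,k}$, and one sets $\varphi^-_{p_k^\star,k}=\varphi^+_{p_k^\star,k}=\varphi_{p_k^\star,k}$; for $p>p_k^\star$ only $0$. *)

(* Defs.v *)
From Stdlib Require Import Reals Lra Lia.
Open Scope R_scope.

(* F_{p,k}(x) = Pr[Bin(k, (1-p)x) >= (k+1)/2]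
             = sum_{j=(k+1)/2}^{k} C(k,j) q^j (1-q)^(k-j),  q = (1-p) x.
   For odd k, (k+1)/2 = Nat.div2 (S k) = S k / 2. *)
Definition F (p : R) (k : nat) (x : R) : R :=
  let q := (1 - p) * x in
  sum_f (S k / 2)%nat k (fun j => C k j * q ^ j * (1 - q) ^ (k - j)).

Definition is_fixed (p : R) (k : nat) (x : R) : Prop :=
  0 <= x <= 1 /\ F p k x = x.

Definition is_pstar (k : nat) (ps : R) : Prop :=
  1/9 <= ps < 1/2 /\
  (forall p, 0 <= p < ps ->
     exists a b, 0 < a < b /\ b <= 1 /\
       forall x, 0 <= x <= 1 -> (F p k x = x <-> x = 0 \/ x = a \/ x = b)) /\
  (exists c, 0 < c <= 1 /\
       forall x, 0 <= x <= 1 -> (F ps k x = x <-> x = 0 \/ x = c)) /\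
  (forall p, ps < p <= 1 ->
       forall x, 0 <= x <= 1 -> (F p k x = x <-> x = 0)).

(* y = phi^-_{p,k}: the smallest positive solution of F_{p,k}(x) = x on [0,1]
   (for p < p*, the smaller of the two positive solutions; for p = p*, the
   unique positive one). *)
Definition is_phi_minus (p : R) (k : nat) (y : R) : Prop :=
  0 < y /\ is_fixed p k y /\
  forall x, 0 < x -> is_fixed p k x -> y <= x.

(* Main.v *)
Require Import Defs.
From Stdlib Require Import Reals Lra Lia.
From Coquelicot Require Import Coquelicot.
Open Scope R_scope.

Notation Cb := Binomial.C.

Lemma dterm (K j : nat) (q : R) : derivable_pt_lim (fun q => Cb K j * q^j * (1-q)^(K-j)) q
  (Cb K j * (INR j * q^(pred j)) * (1-q)^(K-j) + Cb K j * q^j * (INR (K-j) * (-1) * (1-q)^(pred (K-j)))).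
Proof.
apply is_derive_Reals. auto_derive. auto. replace (1 + - q) with (1 - q) by ring.
set (u1 := q ^ pred j). set (u2 := (1-q)^(K-j)). set (u3 := q^j). set (u4 := (1-q)^pred (K-j)). ring.
Qed.

Lemma dsum (f : nat -> R -> R) (df : nat -> R) N q :
  (forall t, derivable_pt_lim (f t) q (df t)) ->
  derivable_pt_lim (fun x => sum_f_R0 (fun t => f t x) N) q (sum_f_R0 df N).
Proof.
intros H. induction N as [|N IH]; simpl.
- exact (H 0%nat).
- apply (derivable_pt_lim_plus (fun x => sum_f_R0 (fun t => f t x) N) (f (S N)) q); auto.
Qed.

Lemma binom1 N i : Cb (S N) (S i) * INR (S i) = INR (S N) * Cb N i.
Proof.
unfold Binomial.C. simpl (S N - S i)%nat.
rewrite !fact_simpl, !mult_INR.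
pose proof (INR_fact_neq_0 N). pose proof (INR_fact_neq_0 i). pose proof (INR_fact_neq_0 (N-i)).
pose proof (pos_INR i). field. repeat split; auto; rewrite S_INR; lra.
Qed.

Lemma binom2 N j : (j <= N)%nat -> Cb (S N) j * INR (S N - j) = INR (S N) * Cb N j.
Proof.
intros Hj. unfold Binomial.C.
replace (S N - j)%nat with (S (N - j)) by lia.
rewrite !fact_simpl, !mult_INR.
pose proof (INR_fact_neq_0 N). pose proof (INR_fact_neq_0 j). pose proof (INR_fact_neq_0 (N-j)).
pose proof (pos_INR (N-j)). field. repeat split; auto; rewrite S_INR; lra.
Qed.

Lemma Cnn N : Cb N N = 1.
Proof. unfold Binomial.C. rewrite Nat.sub_diag. simpl. pose proof (INR_fact_neq_0 N). field. auto. Qed.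

Lemma Cpos N j : 0 < Cb N j.
Proof.
unfold Binomial.C. apply Rdiv_lt_0_compat. apply INR_fact_lt_0.
apply Rmult_lt_0_compat; apply INR_fact_lt_0.
Qed.

Definition dd (K j : nat) (q : R) :=
  Cb K j * (INR j * q^(pred j)) * (1-q)^(K-j) + Cb K j * q^j * (INR (K-j) * (-1) * (1-q)^(pred (K-j))).
Definition aa (N j : nat) (q : R) := Cb N j * q^j * (1-q)^(N-j).

Lemma dd_mid N i q : (S i <= N)%nat -> dd (S N) (S i) q = INR (S N) * (aa N i q - aa N (S i) q).
Proof.
intros Hi. unfold dd, aa. simpl pred.
replace (S N - S i)%nat with (N - i)%nat by lia.
replace (pred (N - i)) with (N - S i)%nat by lia.
pose proof (binom1 N i) as B1.
pose proof (binom2 N (S i) Hi) as B2. replace (S N - S i)%nat with (N - i)%nat in B2 by lia.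
set (u1 := q ^ i). set (u2 := (1-q)^(N-i)). set (u3 := q^S i). set (u4 := (1-q)^(N - S i)).
transitivity ((Cb (S N) (S i) * INR (S i)) * u1 * u2 - (Cb (S N) (S i) * INR (N - i)) * u3 * u4).
ring. rewrite B1, B2. ring.
Qed.

Lemma dd_last N q : dd (S N) (S N) q = INR (S N) * aa N N q.
Proof.
unfold dd, aa. rewrite !Nat.sub_diag, !Cnn. simpl pred. simpl (INR 0). ring.
Qed.

Definition G (k : nat) (q : R) := sum_f (S k / 2) k (fun j => Cb k j * q^j * (1-q)^(k-j)).

Lemma div_half n : (S (S (2 * n)) / 2 = S n)%nat.
Proof.
replace (S (S (2*n))) with (S n * 2)%nat by lia. apply Nat.div_mul. lia.
Qed.

Lemma sumS f i : sum_f_R0 f (S i) = sum_f_R0 f i + f (S i).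
Proof. reflexivity. Qed.

Lemma tele n q : (1 <= n)%nat ->
  sum_f_R0 (fun t => dd (S (2*n)) (t + S n) q) (S (2*n) - S n) = INR (S (2*n)) * aa (2*n) n q.
Proof.
intros Hn.
assert (Hi : forall i, (i < n)%nat ->
  sum_f_R0 (fun t => dd (S (2*n)) (t + S n) q) i = INR (S (2*n)) * (aa (2*n) n q - aa (2*n) (i + S n) q)).
{ induction i as [|i IH]; intros Hlt.
  - change (dd (S (2*n)) (0 + S n) q = INR (S (2 * n)) * (aa (2 * n) n q - aa (2 * n) (0 + S n) q)).
    apply dd_mid. lia.
  - rewrite sumS, IH by lia. replace (S i + S n)%nat with (S (i + S n)) by lia.
    rewrite dd_mid by lia. ring. }
replace (S (2*n) - S n)%nat with n by lia.
destruct n as [|n']; [lia|]. rewrite sumS.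
rewrite Hi by lia.

  replace (S n' + S (S n'))%nat with (S (2 * S n')) by lia.
  rewrite dd_last. replace (n' + S (S n'))%nat with (2 * S n')%nat by lia. ring.
Qed.

Lemma G_deriv n q : (1 <= n)%nat ->
  derivable_pt_lim (G (S (2*n))) q (INR (S (2*n)) * aa (2*n) n q).
Proof.
intros Hn. rewrite <- (tele n q Hn). unfold G, sum_f. rewrite div_half.
apply (dsum (fun t x => Cb (S (2*n)) (t + S n) * x^(t + S n) * (1-x)^(S (2*n) - (t + S n)))
            (fun t => dd (S (2*n)) (t + S n) q)).
intros t. exact (dterm _ _ q).
Qed.

Lemma G_strict n r q : (1 <= n)%nat -> 0 <= r -> r < q -> q <= 1 ->
  G (S (2*n)) r < G (S (2*n)) q.
Proof.
intros Hn Hr Hrq Hq.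
destruct (MVT_cor2 (G (S (2*n))) (fun c => INR (S (2*n)) * aa (2*n) n c) r q Hrq)
  as [c [Hc1 Hc2]].
{ intros c _. apply G_deriv; auto. }
assert (0 < INR (S (2*n)) * aa (2*n) n c).
{ apply Rmult_lt_0_compat. apply lt_0_INR; lia.
  unfold aa. apply Rmult_lt_0_compat. apply Rmult_lt_0_compat. apply Cpos.
  apply pow_lt; lra. apply pow_lt; lra. }
assert (0 < INR (S (2*n)) * aa (2*n) n c * (q - r)) by (apply Rmult_lt_0_compat; lra).
lra.
Qed.

Definition MM n := sum_f_R0 (fun t => Cb (S (2*n)) (t + S n)) (S (2*n) - S n).

Lemma MM_pos n : 0 <= MM n.
Proof. apply cond_pos_sum. intros; left; apply Cpos. Qed.

Lemma G_bound n q : (1 <= n)%nat -> 0 <= q <= 1 -> G (S (2*n)) q <= MM n * q^2.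
Proof.
intros Hn Hq. unfold G, sum_f, MM. rewrite div_half. rewrite Rmult_comm, scal_sum.
apply sum_Rle. intros t _.
set (j := (t + S n)%nat). set (e := (S (2*n) - j)%nat).
assert (Hj : q^j <= q^2).
{ replace j with (2 + (j-2))%nat by (unfold j; lia). rewrite pow_add.
  assert (q^(j-2) <= 1). { rewrite <- (pow1 (j-2)). apply pow_incr; lra. }
  assert (0 <= q^2) by (apply pow_le; lra). nra. }
assert (He : (1-q)^e <= 1). { apply Rle_trans with (1^e); [apply pow_incr; lra | rewrite pow1; lra]. }
assert (0 <= q^j) by (apply pow_le; lra).
assert (0 <= (1-q)^e) by (apply pow_le; lra).
pose proof (Cpos (S (2*n)) j).
assert (q^j * (1-q)^e <= q^2) by nra.
nra.
Qed.

Theorem lemmaA7 :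
  forall (k : nat), Nat.Odd k -> (3 <= k)%nat ->
  forall ps : R, is_pstar k ps ->
  forall (p1 p2 y1 y2 : R),
    0 <= p1 -> p1 < p2 -> p2 <= ps ->
    is_phi_minus p1 k y1 -> is_phi_minus p2 k y2 ->
    y1 < y2.
Proof.
intros k [n Hn] Hk ps Hps p1 p2 y1 y2 H0 H12 H2ps [Hy1pos [Hy1fix Hy1min]] [Hy2pos [[Hy2b Hy2F] _]].
assert (Hn1 : (1 <= n)%nat) by lia.
replace k with (S (2*n)) in * by lia. clear Hn k.
destruct Hps as [[_ Hps] _].
set (K := S (2*n)) in *.
assert (FG : forall p x, F p K x = G K ((1-p)*x)) by reflexivity.
rewrite FG in Hy2F.
assert (Hup : y2 < G K ((1-p1)*y2)).
{ rewrite <- Hy2F at 1. apply G_strict; auto. apply Rmult_le_pos; lra. apply Rmult_lt_compat_r; lra. destruct Hy2b. assert (0 <= p1 * y2) by (apply Rmult_le_pos; lra). nra. }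
pose proof (MM_pos n) as HM.
set (eps := Rmin (y2/2) (1/(2*(MM n+1)))).
assert (He1 : 0 < eps).
{ unfold eps. apply Rmin_glb_lt. lra. apply Rdiv_lt_0_compat; lra. }
assert (He2 : eps <= y2/2) by apply Rmin_l.
assert (He3 : eps <= 1/(2*(MM n+1))) by apply Rmin_r.
assert (He4 : MM n * eps < 1).
{ assert (eps * (2*(MM n + 1)) <= 1).
  { apply (Rmult_le_compat_r (2*(MM n+1))) in He3; [|lra].
    replace (1 / (2 * (MM n + 1)) * (2 * (MM n + 1))) with 1 in He3 by (field; lra). lra. }
  nra. }
assert (Hlow : G K ((1-p1)*eps) - eps < 0).
{ pose proof (G_bound n ((1-p1)*eps) Hn1) as B.
  assert (0 <= (1-p1)*eps <= 1) by (split; nra).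
  specialize (B H). fold K in B.
  assert (((1-p1)*eps)^2 <= eps^2) by (simpl; nra).
  assert (MM n * ((1-p1)*eps)^2 <= MM n * eps^2) by (apply Rmult_le_compat_l; auto).
  assert (MM n * eps^2 < eps) by (simpl; nra).
  lra. }
assert (Hcont : continuity (fun x => G K ((1-p1)*x) - x)).
{ intro x. apply derivable_continuous_pt. eexists.
  apply is_derive_Reals.
  apply (is_derive_minus (fun x => G K ((1-p1)*x)) (fun x => x)).
  apply (is_derive_comp (G K) (fun x => (1-p1)*x)).
  apply is_derive_Reals, G_deriv; auto.
  auto_derive; auto. apply is_derive_id. }
destruct (IVT (fun x => G K ((1-p1)*x) - x) eps y2 Hcont ltac:(lra) Hlow ltac:(lra)) as [z [Hz1 Hz2]].
assert (Hzy : z <> y2) by (intro; subst z; lra).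
assert (Hfz : is_fixed p1 K z) by (split; [lra | rewrite FG; lra]).
pose proof (Hy1min z ltac:(lra) Hfz). lra.
Qed.
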